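(* Let $S$ be an inverse semigroup, regarded as an algebraic structure in the language $\mathcal{L}=\{\cdot,{}^{-1}\}\cup\{s\mid s\in S\}$. If $S$ is an equational domain in the language $\mathcal{L}$, then $S$ is a group.
   Context: A semigroup $S$ is inverse if for every $s\in S$ there is a unique $s^{-1}\in S$ with $ss^{-1}s=s$ and $s^{-1}ss^{-1}=s^{-1}$. The language $\mathcal{L}$ consists of multiplication, the unary operation $s\mapsto s^{-1}$, and a constant symbol for every element of $S$ (interpreted as that element). For a finite set of variables $X=\{x_1,\dots,x_n\}$, a term of $\mathcal{L}$ is a finite product of variables raised to integer powers (negative powers meaning powers of the inverse) and constants from $S$. An equation is an equality $t(X)=s(X)$ of two terms; a system of equations is an arbitrary (possibly infinite) set of equations in $x_1,\dots,x_n$. The solution set in $S$ of a system $\mathbf{S}$ is the set of tuples in $S^n$ satisfying all its equations. A set $Y\subseteq S^n$ is algebraic over $S$ if it is the solution set of some system of equations in $x_1,\dots,x_n$. $S$ is an equational domain (in $\mathcal{L}$) if for every $n$, every finite union $Y_1\cup\dots\cup Y_k$ of algebraic sets $Y_i\subseteq S^n$ is algebraic. *)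

(* Defs.v *)
From mathcomp Require Import all_boot.
Set Implicit Arguments. Unset Strict Implicit. Unset Printing Implicit Defensive.

Definition is_inverse_semigroup (S : Type) (mul : S -> S -> S) (inv : S -> S) : Prop :=
  (forall a b c, mul a (mul b c) = mul (mul a b) c) /\
  (forall s, mul (mul s (inv s)) s = s /\ mul (mul (inv s) s) (inv s) = inv s) /\
  (forall s t, mul (mul s t) s = s -> mul (mul t s) t = t -> t = inv s).

Inductive term (S : Type) (n : nat) : Type :=
| TVar : 'I_n -> term S n
| TCst : S -> term S n
| TMul : term S n -> term S n -> term S n
| TInv : term S n -> term S n.

Fixpoint eval_term (S : Type) (mul : S -> S -> S) (inv : S -> S) (n : nat)
    (p : 'I_n -> S) (t : term S n) : S :=
  match t with
  | TVar i => p i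
  | TCst s => s
  | TMul u v => mul (eval_term mul inv p u) (eval_term mul inv p v)
  | TInv u => inv (eval_term mul inv p u)
  end.

Definition equation (S : Type) (n : nat) := (term S n * term S n)%type.
Definition system (S : Type) (n : nat) := equation S n -> Prop.

(* Points of S^n are functions 'I_n -> S; subsets of S^n are predicates. *)
Definition solution_set (S : Type) (mul : S -> S -> S) (inv : S -> S) (n : nat)
    (Sys : system S n) : ('I_n -> S) -> Prop :=
  fun p => forall e, Sys e -> eval_term mul inv p e.1 = eval_term mul inv p e.2.

Definition algebraic (S : Type) (mul : S -> S -> S) (inv : S -> S) (n : nat)
    (Y : ('I_n -> S) -> Prop) : Prop :=
  exists Sys : system S n, forall p, Y p <-> solution_set mul inv Sys p.

(* Equational domain: every finite (nonempty) union of algebraic sets is algebraic. *)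
Definition equational_domain (S : Type) (mul : S -> S -> S) (inv : S -> S) : Prop :=
  forall (n k : nat) (Ys : 'I_k.+1 -> ('I_n -> S) -> Prop),
    (forall i, algebraic mul inv (Ys i)) ->
    algebraic mul inv (fun p => exists i, Ys i p).

Definition is_group (S : Type) (mul : S -> S -> S) : Prop :=
  exists e : S, forall s, mul e s = s /\ mul s e = s /\
    exists t, mul s t = e /\ mul t s = e.

(* Main.v *)
Require Import Defs.
From mathcomp Require Import all_boot.
From Stdlib Require Import Classical.
Set Implicit Arguments. Unset Strict Implicit.

Definition idem (S : Type) (mul : S -> S -> S) (e : S) := mul e e = e.

Lemma invinv (S : Type) (mul : S -> S -> S) (inv : S -> S) :
  is_inverse_semigroup mul inv -> forall s, inv (inv s) = s.
Proof.
case=> A [I U] s; symmetry; apply: U; [exact: (I s).2 | exact: (I s).1].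
Qed.

Lemma idinv (S : Type) (mul : S -> S -> S) (inv : S -> S) :
  is_inverse_semigroup mul inv -> forall e, idem mul e -> inv e = e.
Proof.
case=> A [I U] e he; symmetry; apply: U; rewrite /idem in he; by rewrite !he.
Qed.

Lemma idl (S : Type) (mul : S -> S -> S) (inv : S -> S) :
  is_inverse_semigroup mul inv -> forall f X, idem mul f -> mul f (mul f X) = mul f X.
Proof. case=> A _ f X hf; by rewrite A hf. Qed.

Lemma ssinv_idem (S : Type) (mul : S -> S -> S) (inv : S -> S) :
  is_inverse_semigroup mul inv -> forall s, idem mul (mul s (inv s)) /\ idem mul (mul (inv s) s).
Proof.
case=> A [I U] s; rewrite /idem; split; rewrite !A.
  by rewrite (I s).1.
by rewrite (I s).2.
Qed.

Lemma prod_idem (S : Type) (mul : S -> S -> S) (inv : S -> S) :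
  is_inverse_semigroup mul inv -> forall e f, idem mul e -> idem mul f -> idem mul (mul e f).
Proof.
move=> H e f he hf; have H' := H; case: H' => A [I U].
have [K1 K2] := I (mul e f).
set x := inv (mul e f) in K1 K2 *.
rewrite -!A in K1 K2.
have K2' : forall Y, mul x (mul e (mul f (mul x Y))) = mul x Y.
  by move=> Y; rewrite [mul f (mul x Y)]A [mul e (mul (mul f x) Y)]A [mul x (mul (mul e (mul f x)) Y)]A K2.
have Hy : mul f (mul x e) = x.
  apply: U; rewrite -!A.
    by rewrite (idl H _ hf) (idl H _ he).
  by rewrite (idl H _ hf) (idl H _ he) K2'.
have Hx : idem mul x.
  by rewrite /idem -{1 2}Hy -!A K2' Hy.
have : inv x = x by apply: idinv.
by rewrite /x (invinv H) => ->.
Qed.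

Lemma idcomm (S : Type) (mul : S -> S -> S) (inv : S -> S) :
  is_inverse_semigroup mul inv -> forall e f, idem mul e -> idem mul f -> mul e f = mul f e.
Proof.
move=> H e f he hf; have H' := H; case: H' => A [I U].
have hef := prod_idem H he hf; have hfe := prod_idem H hf he.
rewrite -(idinv H hef); symmetry; apply: U.
  by rewrite -!A (idl H _ hf) (idl H _ he) A hef.
by rewrite -!A (idl H _ he) (idl H _ hf) A hfe.
Qed.

Lemma L4 (S : Type) (mul : S -> S -> S) (inv : S -> S) :
  is_inverse_semigroup mul inv -> forall s Y, mul s (mul (inv s) (mul s Y)) = mul s Y.
Proof. case=> A [I U] s Y; by rewrite !A (I s).1. Qed.

Lemma L4' (S : Type) (mul : S -> S -> S) (inv : S -> S) :
  is_inverse_semigroup mul inv -> forall s, mul s (mul (inv s) s) = s.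
Proof. case=> A [I U] s; by rewrite A (I s).1. Qed.

Lemma L3 (S : Type) (mul : S -> S -> S) (inv : S -> S) :
  is_inverse_semigroup mul inv -> forall s Y, mul (inv s) (mul s (mul (inv s) Y)) = mul (inv s) Y.
Proof. case=> A [I U] s Y; by rewrite !A (I s).2. Qed.

Lemma L3' (S : Type) (mul : S -> S -> S) (inv : S -> S) :
  is_inverse_semigroup mul inv -> forall s, mul (inv s) (mul s (inv s)) = inv s.
Proof. case=> A [I U] s; by rewrite A (I s).2. Qed.

Lemma comml (S : Type) (mul : S -> S -> S) (inv : S -> S) :
  is_inverse_semigroup mul inv -> forall e f X, idem mul e -> idem mul f ->
  mul e (mul f X) = mul f (mul e X).
Proof.
move=> H e f X he hf; have H' := H; case: H' => A _.
by rewrite !A (idcomm H he hf).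
Qed.

Lemma conj_ex (S : Type) (mul : S -> S -> S) (inv : S -> S) :
  is_inverse_semigroup mul inv -> forall e s, idem mul e ->
  exists f, idem mul f /\ mul e s = mul s f /\
    forall X, mul e (mul s X) = mul s (mul f X).
Proof.
move=> H e s he; have H' := H; case: H' => A [I U].
have [hp hq] := ssinv_idem H s.
have P : forall Y, mul s (mul (inv s) Y) = mul (mul s (inv s)) Y by move=> Y; rewrite A.
exists (mul (inv s) (mul e s)); split; [|split].
- rewrite /idem -!A P (comml H _ he hp) (idl H _ he) -P.
  by rewrite (L3 H).
- by rewrite P (comml H _ hp he) -A (L4' H).
- move=> X; rewrite -!A P (comml H _ hp he) -A (L4 H) //.
Qed.

Lemma inv_te (S : Type) (mul : S -> S -> S) (inv : S -> S) :
  is_inverse_semigroup mul inv -> forall t e, idem mul e ->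
  inv (mul t e) = mul e (inv t).
Proof.
move=> H t e he; have H' := H; case: H' => A [I U].
have [hp hq] := ssinv_idem H t.
have Q : forall Y, mul (inv t) (mul t Y) = mul (mul (inv t) t) Y by move=> Y; rewrite A.
symmetry; apply: U; rewrite -!A.
  by rewrite (idl H _ he) Q (comml H _ he hq) he -Q (L4 H).
by rewrite (idl H _ he) Q (comml H _ hq he) (idl H _ he) -Q (L3' H).
Qed.

Definition Rel (S : Type) (mul : S -> S -> S) (u v w : S) :=
  exists t e1 e2, idem mul e1 /\ idem mul e2 /\ u = mul t e1 /\ v = mul t e2 /\
    w = mul t (mul e1 e2).

Lemma R_mul (S : Type) (mul : S -> S -> S) (inv : S -> S) :
  is_inverse_semigroup mul inv -> forall u v w u' v' w',
  Rel mul u v w -> Rel mul u' v' w' -> Rel mul (mul u u') (mul v v') (mul w w').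
Proof.
move=> H u v w u' v' w'; have H' := H; case: H' => A [I U].
case=> t [e1 [e2 [h1 [h2 [-> [-> ->]]]]]].
case=> t' [e1' [e2' [h1' [h2' [-> [-> ->]]]]]].
have [f1 [hf1 [_ c1]]] := conj_ex H t' h1.
have [f2 [hf2 [_ c2]]] := conj_ex H t' h2.
exists (mul t t'), (mul f1 e1'), (mul f2 e2'); split; [|split; [|split; [|split]]].
- exact: prod_idem.
- exact: prod_idem.
- by rewrite -!A c1.
- by rewrite -!A c2.
- by rewrite -!A c2 c1 (comml H _ h1' hf2).
Qed.

Lemma R_inv (S : Type) (mul : S -> S -> S) (inv : S -> S) :
  is_inverse_semigroup mul inv -> forall u v w,
  Rel mul u v w -> Rel mul (inv u) (inv v) (inv w).
Proof.
move=> H u v w; have H' := H; case: H' => A [I U].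
case=> t [e1 [e2 [h1 [h2 [-> [-> ->]]]]]].
have [g1 [hg1 [p1 c1]]] := conj_ex H (inv t) h1.
have [g2 [hg2 [p2 c2]]] := conj_ex H (inv t) h2.
exists (inv t), g1, g2; split; [|split; [|split; [|split]]] => //.
- by rewrite (inv_te H _ h1).
- by rewrite (inv_te H _ h2).
- by rewrite (inv_te H _ (prod_idem H h1 h2)) -A p2 c1.
Qed.

Lemma R_diag (S : Type) (mul : S -> S -> S) (inv : S -> S) :
  is_inverse_semigroup mul inv -> forall c, Rel mul c c c.
Proof.
move=> H c; have [_ hq] := ssinv_idem H c.
exists c, (mul (inv c) c), (mul (inv c) c); split; [|split; [|split; [|split]]] => //.
- by rewrite (L4' H).
- by rewrite (L4' H).
- by rewrite hq (L4' H).
Qed.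

Lemma R_det (S : Type) (mul : S -> S -> S) (inv : S -> S) :
  is_inverse_semigroup mul inv -> forall u v w,
  Rel mul u v w -> w = mul u (mul (inv v) v).
Proof.
move=> H u v w; have H' := H; case: H' => A [I U].
case=> t [e1 [e2 [h1 [h2 [-> [-> ->]]]]]].
have [hp hq] := ssinv_idem H t.
have Q : forall Y, mul (inv t) (mul t Y) = mul (mul (inv t) t) Y by move=> Y; rewrite A.
rewrite (inv_te H _ h2) -!A Q (comml H _ h2 hq) h2 (comml H _ h1 hq) -Q (L4 H) //.
Qed.

Theorem theorem3 (S : Type) (mul : S -> S -> S) (inv : S -> S) (s0 : S) :
  is_inverse_semigroup mul inv ->
  equational_domain mul inv ->
  is_group mul.
Proof.
move=> H ED; have H' := H; case: H' => A [I U].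
case: (classic (exists e g, idem mul e /\ idem mul g /\ mul e g = g /\ mul g e = g /\ g <> e)).
- case=> e [g [he [hg [heg [hge neq]]]]].
  pose a (i : 'I_2) := if val i == 0 then e else g.
  pose b (i : 'I_2) := if val i == 0 then g else e.
  pose p (i : 'I_2) := g.
  pose Ys (i : 'I_2) (q : 'I_2 -> S) := forall j : 'I_2, q j = (if val i == 0 then a j else b j).
  have alg : forall i, algebraic mul inv (Ys i).
    move=> i; exists (fun eq => exists j, eq = (TVar S j, TCst 2 (if val i == 0 then a j else b j))).
    move=> q; split.
      by move=> Hq eq [j ->] /=; rewrite Hq.
    by move=> Hq j; have := Hq _ (ex_intro _ j erefl).
  have [Sys HS] := ED 2 1 Ys alg.
  have solA : solution_set mul inv Sys a by apply/HS; exists ord0.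
  have solB : solution_set mul inv Sys b by apply/HS; exists ord_max.
  have key : forall t, Rel mul (eval_term mul inv a t) (eval_term mul inv b t) (eval_term mul inv p t).
    elim=> [i|c|u IHu v IHv|u IHu] /=.
    + rewrite /a /b /p; case: (val i == 0).
        exists e, e, g; do 4 split => //; by rewrite (idl H _ he).
      exists e, g, e; do 4 split => //; by rewrite hge.
    + exact: R_diag H c.
    + exact: R_mul H _ _ _ _ _ _ IHu IHv.
    + exact: R_inv H _ _ _ IHu.
  have solP : solution_set mul inv Sys p.
    move=> eq Heq.
    rewrite (R_det H (key eq.1)) (R_det H (key eq.2)).
    by rewrite (solA eq Heq) (solB eq Heq).
  have [i Hi] := (proj2 (HS p)) solP.
  move: Hi; rewrite /Ys; case: (val i == 0) => Hi.
    by move: (Hi ord0); rewrite /p /a /=.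
  by move: (Hi ord_max); rewrite /p /b /=.
- move=> Hn.
  have [hp0 _] := ssinv_idem H s0.
  set e0 := mul s0 (inv s0) in hp0.
  have allid : forall f, idem mul f -> f = e0.
    move=> f hf.
    have hg := prod_idem H hp0 hf.
    have c := idcomm H hp0 hf.
    have g1 : mul e0 f = e0.
      apply: NNPP => ne; apply: Hn; exists e0, (mul e0 f); split; [done|split; [done|split; [|split; [|done]]]].
      - by rewrite A hp0.
      - by rewrite c -A hp0.
    have g2 : mul e0 f = f.
      apply: NNPP => ne; apply: Hn; exists f, (mul e0 f); split; [done|split; [done|split; [|split; [|done]]]].
      - by rewrite c A hf.
      - by rewrite -A hf.
    by rewrite -g2 g1.
  exists e0 => s.
  have [h1 h2] := ssinv_idem H s.
  have E1 := allid _ h1; have E2 := allid _ h2.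
  split; [|split].
  - by rewrite -E1 (I s).1.
  - by rewrite -E2 A (I s).1.
  - by exists (inv s).
Qed.
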